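(* Let $\{w^k\}$ be generated by the L-GADMM iteration and $\{\bar w^k\}$ be the auxiliary sequence. Then for every $k\ge0$, $$(w^k-\bar w^k)^\top M^\top HM\big\{(w^k-\bar w^k)-(w^{k+1}-\bar w^{k+1})\big\}\ \ge\ \tfrac12\big\|(w^k-\bar w^k)-(w^{k+1}-\bar w^{k+1})\big\|_{Q^\top+Q}^2.$$
   Context: Standing setting. Let $m\ge 2$, $\ell$, $n_1,\dots,n_m$ be positive integers. For $i=1,\dots,m$ let $\theta_i:\mathbb{R}^{n_i}\to\mathbb{R}$ be convex, $\mathcal{X}_i\subseteq\mathbb{R}^{n_i}$ nonempty closed convex, $A_i\in\mathbb{R}^{\ell\times n_i}$ of full column rank, and $b\in\mathbb{R}^\ell$. Problem (P): $\min\{\sum_{i=1}^m\theta_i(x_i):\sum_{i=1}^mA_ix_i=b,\ x_i\in\mathcal{X}_i\}$, assumed to have a nonempty solution set. Write $u=(x_1,\dots,x_m)$, $w=(x_1,\dots,x_m,y)$ with $y\in\mathbb{R}^\ell$, $\theta(u)=\sum_i\theta_i(x_i)$, $F(w)=(-A_1^\top y,\dots,-A_m^\top y,\ \sum_iA_ix_i-b)$, $\mathcal{W}=\mathcal{X}_1\times\cdots\times\mathcal{X}_m\times\mathbb{R}^\ell$, and $\mathcal{W}^*=\{w^*\in\mathcal{W}:\theta(u)-\theta(u^* )+(w-w^* )^\top F(w^* )\ge0\ \forall w\in\mathcal{W}\}$ (nonempty). For symmetric $G$, $\|v\|_G^2:=v^\top Gv$; $\|\cdot\|$ is the Euclidean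 norm. Vectors are partitioned as $w=(R,x_m,y)$ with $R=(x_1,\dots,x_{m-1})$. Parameters: $\rho>0$, $\gamma\in(0,2)$, symmetric positive definite $P_i\in\mathbb{R}^{n_i\times n_i}$ ($i=1,\dots,m$) such that $G_1\succ0$, where $G_1$ is the symmetric block matrix with diagonal blocks $P_1,\dots,P_{m-1}$ and $(i,j)$ block $-\rho A_i^\top A_j$ for $i\ne j$, $1\le i,j\le m-1$. Matrices (w.r.t. the partition $(R,x_m,y)$): $Q=\begin{pmatrix}G_1&0&0\\0&\rho A_m^\top A_m+P_m&(1-\gamma)A_m^\top\\0&-A_m&\frac1\rho I_\ell\end{pmatrix}$, $M=\begin{pmatrix}I&0&0\\0&I_{n_m}&0\\0&-\rho A_m&\gamma I_\ell\end{pmatrix}$, $H=\begin{pmatrix}G_1&0&0\\0&P_m+\frac\rho\gamma A_m^\top A_m&\frac{1-\gamma}\gamma A_m^\top\\0&\frac{1-\gamma}\gamma A_m&\frac1{\gamma\rho}I_\ell\end{pmatrix}$, $N=Q^\top+Q-M^\top HM$. L-GADMM iteration: from an arbitrary $w^0=(x_1^0,\dots,x_m^0,y^0)\in\mathcal{W}$, for $k=0,1,2,\dots$: $x_j^{k+1}=\arg\min_{x_j\in\mathcal{X}_j}\{\theta_j(x_j)+\frac\rho2\|A_jx_j+\sum_{i=1,i\ne j}^mA_ix_i^k-b-\frac{y^k}\rho\|^2+\frac12\|x_j-x_j^k\|_{P_j}^2\}$ for $j=1,\dots,m-1$; $x_m^{k+1}=\arg\min_{x_m\in\mathcal{X}_m}\{\theta_m(x_m)+\frac\rho2\|\gamma\sum_{i=1}^{m-1}A_ix_i^{k+1}+(1-\gamma)(b-A_mx_m^k)+A_mx_m-b-\frac{y^k}\rho\|^2+\frac12\|x_m-x_m^k\|_{P_m}^2\}$;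 $y^{k+1}=y^k-\rho\big(\gamma\sum_{i=1}^{m-1}A_ix_i^{k+1}+(1-\gamma)(b-A_mx_m^k)+A_mx_m^{k+1}-b\big)$. Auxiliary sequence: $\bar w^k=(\bar x_1^k,\dots,\bar x_m^k,\bar y^k)$ with $\bar x_i^k=x_i^{k+1}$ ($i=1,\dots,m$) and $\bar y^k=y^k-\rho(\sum_{i=1}^{m-1}A_ix_i^{k+1}+A_mx_m^k-b)$; $\bar u^k=(\bar x_1^k,\dots,\bar x_m^k)$, $R^k=(x_1^k,\dots,x_{m-1}^k)$, $\bar R^k=(\bar x_1^k,\dots,\bar x_{m-1}^k)$. *)

(* Defs.v *)
From HB Require Import structures.
From mathcomp Require Import all_boot all_order all_algebra.
From mathcomp Require Import all_classical all_reals all_analysis.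
Set Implicit Arguments. Unset Strict Implicit. Unset Printing Implicit Defensive.
Import Order.TTheory GRing.Theory Num.Theory.
Import numFieldNormedType.Exports.
Local Open Scope ring_scope.
Local Open Scope classical_set_scope.

(* Block layout: the first m-1 blocks are indexed by i : 'I_p (p = m-1 >= 1),
   block i has dimension n i; the last block x_m has dimension nm; y has dim l. *)

Definition sqn {R : realType} {k : nat} (v : 'cV[R]_k) : R := (v^T *m v) 0 0.
Definition qf {R : realType} {k : nat} (G : 'M[R]_k) (v : 'cV[R]_k) : R :=
  (v^T *m G *m v) 0 0.
Definition bf {R : realType} {k : nat} (u : 'cV[R]_k) (G : 'M[R]_k) (v : 'cV[R]_k) : R :=
  (u^T *m G *m v) 0 0.

Definition cvx_fun {R : realType} {k : nat} (f : 'cV[R]_k -> R) : Prop :=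
  forall (x y : 'cV[R]_k) (t : R), 0 <= t <= 1 ->
    f (t *: x + (1 - t) *: y) <= t * f x + (1 - t) * f y.
Definition cvx_set {R : realType} {k : nat} (X : set 'cV[R]_k) : Prop :=
  forall (x y : 'cV[R]_k) (t : R), X x -> X y -> 0 <= t <= 1 ->
    X (t *: x + (1 - t) *: y).

Definition sym_mx {R : realType} {k : nat} (G : 'M[R]_k) : Prop := G^T = G.
Definition posdef {R : realType} {k : nat} (G : 'M[R]_k) : Prop :=
  forall v : 'cV[R]_k, v != 0 -> 0 < qf G v.

Definition Acat {R : realType} {p l : nat} {n : 'I_p -> nat}
  (A : forall i : 'I_p, 'M[R]_(l, n i)) : 'M[R]_(l, \sum_(i < p) n i) :=
  \mxrow_(i < p) A i.

Definition Rvec {R : realType} {p : nat} {n : 'I_p -> nat}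
  (x : forall i : 'I_p, 'cV[R]_(n i)) : 'cV[R]_(\sum_(i < p) n i) :=
  \mxcol_(i < p) x i.

Definition wvec {R : realType} {p nm l : nat} {n : 'I_p -> nat}
  (x : forall i : 'I_p, 'cV[R]_(n i)) (xm : 'cV[R]_nm) (y : 'cV[R]_l)
  : 'cV[R]_((\sum_(i < p) n i + nm) + l) :=
  col_mx (col_mx (Rvec x) xm) y.

(* G_1 : block matrix with diagonal blocks P_i and (i,j) blocks -rho A_i^T A_j, i<>j.
   Written as  diag(P_i) - rho (Acat^T Acat - diag(A_i^T A_i)). *)
Definition G1mx {R : realType} {p l : nat} {n : 'I_p -> nat} (rho : R)
  (P : forall i : 'I_p, 'M[R]_(n i)) (A : forall i : 'I_p, 'M[R]_(l, n i))
  : 'M[R]_(\sum_(i < p) n i) :=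
  \mxdiag_(i < p) P i
  - rho *: ((Acat A)^T *m Acat A - \mxdiag_(i < p) ((A i)^T *m A i)).

Definition Qmx {R : realType} {p nm l : nat} {n : 'I_p -> nat} (rho gam : R)
  (P : forall i : 'I_p, 'M[R]_(n i)) (Pm : 'M[R]_nm)
  (A : forall i : 'I_p, 'M[R]_(l, n i)) (Am : 'M[R]_(l, nm))
  : 'M[R]_((\sum_(i < p) n i + nm) + l) :=
  block_mx (block_mx (G1mx rho P A) 0 0 (rho *: (Am^T *m Am) + Pm))
           (col_mx 0 ((1 - gam) *: Am^T))
           (row_mx 0 (- Am))
           (rho^-1 *: 1%:M).

Definition Mmx {R : realType} {p nm l : nat} {n : 'I_p -> nat} (rho gam : R)
  (Am : 'M[R]_(l, nm)) : 'M[R]_((\sum_(i < p) n i + nm) + l) :=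
  block_mx (block_mx 1%:M 0 0 1%:M) 0
           (row_mx (0 : 'M[R]_(l, \sum_(i < p) n i)) (- (rho *: Am)))
           (gam *: 1%:M).

Definition Hmx {R : realType} {p nm l : nat} {n : 'I_p -> nat} (rho gam : R)
  (P : forall i : 'I_p, 'M[R]_(n i)) (Pm : 'M[R]_nm)
  (A : forall i : 'I_p, 'M[R]_(l, n i)) (Am : 'M[R]_(l, nm))
  : 'M[R]_((\sum_(i < p) n i + nm) + l) :=
  block_mx (block_mx (G1mx rho P A) 0 0 (Pm + (rho / gam) *: (Am^T *m Am)))
           (col_mx 0 (((1 - gam) / gam) *: Am^T))
           (row_mx 0 (((1 - gam) / gam) *: Am))
           ((gam * rho)^-1 *: 1%:M).

Definition theta_u {R : realType} {p nm : nat} {n : 'I_p -> nat}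
  (th : forall i : 'I_p, 'cV[R]_(n i) -> R) (thm : 'cV[R]_nm -> R)
  (x : forall i : 'I_p, 'cV[R]_(n i)) (xm : 'cV[R]_nm) : R :=
  \sum_(i < p) th i (x i) + thm xm.

Definition Fmap {R : realType} {p nm l : nat} {n : 'I_p -> nat}
  (A : forall i : 'I_p, 'M[R]_(l, n i)) (Am : 'M[R]_(l, nm)) (b : 'cV[R]_l)
  (x : forall i : 'I_p, 'cV[R]_(n i)) (xm : 'cV[R]_nm) (y : 'cV[R]_l)
  : 'cV[R]_((\sum_(i < p) n i + nm) + l) :=
  col_mx (col_mx (- ((Acat A)^T *m y)) (- (Am^T *m y)))
         (\sum_(i < p) A i *m x i + Am *m xm - b).

Definition in_Wstar {R : realType} {p nm l : nat} {n : 'I_p -> nat}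
  (th : forall i : 'I_p, 'cV[R]_(n i) -> R) (thm : 'cV[R]_nm -> R)
  (X : forall i : 'I_p, set 'cV[R]_(n i)) (Xm : set 'cV[R]_nm)
  (A : forall i : 'I_p, 'M[R]_(l, n i)) (Am : 'M[R]_(l, nm)) (b : 'cV[R]_l)
  (xs : forall i : 'I_p, 'cV[R]_(n i)) (xms : 'cV[R]_nm) (ys : 'cV[R]_l) : Prop :=
  (forall i, X i (xs i)) /\ Xm xms /\
  forall (x : forall i : 'I_p, 'cV[R]_(n i)) (xm : 'cV[R]_nm) (y : 'cV[R]_l),
    (forall i, X i (x i)) -> Xm xm ->
    0 <= theta_u th thm x xm - theta_u th thm xs xms
         + ((wvec x xm y - wvec xs xms ys)^T *m Fmap A Am b xs xms ys) 0 0.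

Definition feasibleP {R : realType} {p nm l : nat} {n : 'I_p -> nat}
  (X : forall i : 'I_p, set 'cV[R]_(n i)) (Xm : set 'cV[R]_nm)
  (A : forall i : 'I_p, 'M[R]_(l, n i)) (Am : 'M[R]_(l, nm)) (b : 'cV[R]_l)
  (x : forall i : 'I_p, 'cV[R]_(n i)) (xm : 'cV[R]_nm) : Prop :=
  (forall i, X i (x i)) /\ Xm xm /\ \sum_(i < p) A i *m x i + Am *m xm = b.

Definition solvesP {R : realType} {p nm l : nat} {n : 'I_p -> nat}
  (th : forall i : 'I_p, 'cV[R]_(n i) -> R) (thm : 'cV[R]_nm -> R)
  (X : forall i : 'I_p, set 'cV[R]_(n i)) (Xm : set 'cV[R]_nm)
  (A : forall i : 'I_p, 'M[R]_(l, n i)) (Am : 'M[R]_(l, nm)) (b : 'cV[R]_l)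
  (xs : forall i : 'I_p, 'cV[R]_(n i)) (xms : 'cV[R]_nm) : Prop :=
  feasibleP X Xm A Am b xs xms /\
  forall x xm, feasibleP X Xm A Am b x xm ->
    theta_u th thm xs xms <= theta_u th thm x xm.

Definition obj_j {R : realType} {p nm l : nat} {n : 'I_p -> nat}
  (th : forall i : 'I_p, 'cV[R]_(n i) -> R)
  (A : forall i : 'I_p, 'M[R]_(l, n i)) (Am : 'M[R]_(l, nm)) (b : 'cV[R]_l)
  (rho : R) (P : forall i : 'I_p, 'M[R]_(n i))
  (xk : forall i : 'I_p, 'cV[R]_(n i)) (xmk : 'cV[R]_nm) (yk : 'cV[R]_l)
  (j : 'I_p) (z : 'cV[R]_(n j)) : R :=
  th j z
  + rho / 2 * sqn (A j *m z + (\sum_(i < p | i != j) A i *m xk i + Am *m xmk)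
                   - b - rho^-1 *: yk)
  + 1 / 2 * qf (P j) (z - xk j).

(* objective of the x_m-subproblem; xk1 = x^{k+1}_{1..m-1} *)
Definition obj_m {R : realType} {p nm l : nat} {n : 'I_p -> nat}
  (thm : 'cV[R]_nm -> R)
  (A : forall i : 'I_p, 'M[R]_(l, n i)) (Am : 'M[R]_(l, nm)) (b : 'cV[R]_l)
  (rho gam : R) (Pm : 'M[R]_nm)
  (xk1 : forall i : 'I_p, 'cV[R]_(n i)) (xmk : 'cV[R]_nm) (yk : 'cV[R]_l)
  (z : 'cV[R]_nm) : R :=
  thm z
  + rho / 2 * sqn (gam *: \sum_(i < p) A i *m xk1 i + (1 - gam) *: (b - Am *m xmk)
                   + Am *m z - b - rho^-1 *: yk)
  + 1 / 2 * qf Pm (z - xmk).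

(* the L-GADMM iteration, as a relation on the generated sequences:
   each x-update is a minimizer of the corresponding subproblem over its set *)
Definition LGADMM {R : realType} {p nm l : nat} {n : 'I_p -> nat}
  (th : forall i : 'I_p, 'cV[R]_(n i) -> R) (thm : 'cV[R]_nm -> R)
  (X : forall i : 'I_p, set 'cV[R]_(n i)) (Xm : set 'cV[R]_nm)
  (A : forall i : 'I_p, 'M[R]_(l, n i)) (Am : 'M[R]_(l, nm)) (b : 'cV[R]_l)
  (rho gam : R) (P : forall i : 'I_p, 'M[R]_(n i)) (Pm : 'M[R]_nm)
  (x : nat -> forall i : 'I_p, 'cV[R]_(n i)) (xm : nat -> 'cV[R]_nm)
  (y : nat -> 'cV[R]_l) : Prop :=
  [/\ (forall i, X i (x 0%N i)), Xm (xm 0%N),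
      (forall (k : nat) (j : 'I_p), X j (x k.+1 j) /\
         forall z, X j z ->
           obj_j th A Am b rho P (x k) (xm k) (y k) (x k.+1 j)
           <= obj_j th A Am b rho P (x k) (xm k) (y k) z),
      (forall k : nat, Xm (xm k.+1) /\
         forall z, Xm z ->
           obj_m thm A Am b rho gam Pm (x k.+1) (xm k) (y k) (xm k.+1)
           <= obj_m thm A Am b rho gam Pm (x k.+1) (xm k) (y k) z) &
      (forall k : nat, y k.+1 = y k - rho *: (gam *: \sum_(i < p) A i *m x k.+1 i
                         + (1 - gam) *: (b - Am *m xm k) + Am *m xm k.+1 - b))].

Definition wbar {R : realType} {p nm l : nat} {n : 'I_p -> nat}
  (A : forall i : 'I_p, 'M[R]_(l, n i)) (Am : 'M[R]_(l, nm)) (b : 'cV[R]_l) (rho : R)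
  (x : nat -> forall i : 'I_p, 'cV[R]_(n i)) (xm : nat -> 'cV[R]_nm)
  (y : nat -> 'cV[R]_l) (k : nat) : 'cV[R]_((\sum_(i < p) n i + nm) + l) :=
  wvec (x k.+1) (xm k.+1)
       (y k - rho *: (\sum_(i < p) A i *m x k.+1 i + Am *m xm k - b)).

(* Main.v *)
Require Import Defs.
From HB Require Import structures.
From mathcomp Require Import all_boot all_order all_algebra.
From mathcomp Require Import all_classical all_reals all_analysis.
From mathcomp Require Import ring lra.
Set Implicit Arguments. Unset Strict Implicit. Unset Printing Implicit Defensive.
Import Order.TTheory GRing.Theory Num.Theory.
Import numFieldNormedType.Exports.
Local Open Scope ring_scope.
Local Open Scope classical_set_scope.

Section IP.
Variable R : realFieldType.
Definition ip {k : nat} (u v : 'cV[R]_k) : R := (u^T *m v) 0 0.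

Lemma tr11 (M : 'M[R]_1) : M^T 0 0 = M 0 0.
Proof. by rewrite mxE. Qed.

Lemma ipC k (u v : 'cV[R]_k) : ip u v = ip v u.
Proof. by rewrite /ip -tr11 trmx_mul trmxK. Qed.

Lemma ipDr k (u v w : 'cV[R]_k) : ip u (v + w) = ip u v + ip u w.
Proof. by rewrite /ip mulmxDr mxE. Qed.
Lemma ipDl k (u v w : 'cV[R]_k) : ip (v + w) u = ip v u + ip w u.
Proof. by rewrite ipC ipDr !(ipC u). Qed.
Lemma ipNr k (u v : 'cV[R]_k) : ip u (- v) = - ip u v.
Proof. by rewrite /ip mulmxN mxE. Qed.
Lemma ipNl k (u v : 'cV[R]_k) : ip (- v) u = - ip v u.
Proof. by rewrite ipC ipNr ipC. Qed.
Lemma ipBr k (u v w : 'cV[R]_k) : ip u (v - w) = ip u v - ip u w.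
Proof. by rewrite ipDr ipNr. Qed.
Lemma ipBl k (u v w : 'cV[R]_k) : ip (v - w) u = ip v u - ip w u.
Proof. by rewrite ipDl ipNl. Qed.
Lemma ipZr k a (u v : 'cV[R]_k) : ip u (a *: v) = a * ip u v.
Proof. by rewrite /ip -scalemxAr mxE. Qed.
Lemma ipZl k a (u v : 'cV[R]_k) : ip (a *: v) u = a * ip v u.
Proof. by rewrite ipC ipZr ipC. Qed.
Lemma ip_mul k l (u : 'cV[R]_k) (C : 'M[R]_(k, l)) (v : 'cV[R]_l) :
  ip u (C *m v) = ip (C^T *m u) v.
Proof. by rewrite /ip trmx_mul trmxK mulmxA. Qed.
Lemma ip0r k (u : 'cV[R]_k) : ip u 0 = 0.
Proof. by rewrite /ip mulmx0 mxE. Qed.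
Lemma ip0l k (u : 'cV[R]_k) : ip 0 u = 0.
Proof. by rewrite ipC ip0r. Qed.
End IP.

Lemma small_t (R : realFieldType) (a b : R) :
  (forall t, 0 < t <= 1 -> 0 <= t * a + t ^+ 2 * b) -> 0 <= a.
Proof.
move=> H; case: (lerP 0 a) => // ha.
have hD : 0 < `|b| - a by have := normr_ge0 b; lra.
set t := - a / (`|b| - a).
have ht : 0 < t <= 1.
  apply/andP; split; first by rewrite /t divr_gt0 //; lra.
  by rewrite /t ler_pdivrMr //; have := normr_ge0 b; lra.
have := H t ht.
have -> : t * a + t ^+ 2 * b = a ^+ 2 * (b - `|b| + a) / (`|b| - a) ^+ 2.
  by rewrite /t; field; rewrite gt_eqF.
have hb : b <= `|b| by apply: ler_norm.
have : a ^+ 2 * (b - `|b| + a) / (`|b| - a) ^+ 2 < 0.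
  rewrite pmulr_llt0 ?invr_gt0 ?exprn_gt0 //.
  rewrite pmulr_rlt0; first lra.
  by rewrite exprn_even_gt0 //= lt_eqF.
lra.
Qed.

Lemma opt_cond (R : realType) k l (f : 'cV[R]_k -> R) (X : set 'cV[R]_k)
  (C : 'M[R]_(l,k)) (c : 'cV[R]_l) (rho : R) (P : 'M[R]_k) (z0 zs : 'cV[R]_k)
  (phi : 'cV[R]_k -> R) :
  cvx_fun f -> cvx_set X -> sym_mx P ->
  (forall z, phi z = f z + rho / 2 * sqn (C *m z + c) + 1 / 2 * qf P (z - z0)) ->
  X zs -> (forall z, X z -> phi zs <= phi z) ->
  forall z, X z -> 0 <= f z - f zs
     + ip (z - zs) (rho *: (C^T *m (C *m zs + c)) + P *m (zs - z0)).
Proof.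
move=> cf cX sP Hphi Xzs Hmin z Xz.
set h := z - zs; set v := C *m zs + c; set u := zs - z0.
set w := C *m h.
apply: (@small_t _ _ (rho / 2 * ip w w + 1 / 2 * ip h (P *m h))) => t t01.
have t01' : 0 <= t <= 1 by case/andP: t01 => ? ?; apply/andP; split => //; lra.
have Xt := cX z zs t Xz Xzs t01'.
have H1 := Hmin _ Xt; rewrite !Hphi in H1.
have cvx := cf z zs t t01'.
have e1 : t *: z + (1 - t) *: zs = zs + t *: h.
  by apply/matrixP => i j; rewrite !mxE; ring.
rewrite e1 in H1 cvx.
have e2 : C *m (zs + t *: h) + c = v + t *: w.
  by rewrite mulmxDr -scalemxAr addrAC.
have e3 : zs + t *: h - z0 = u + t *: h.
  by apply/matrixP => i j; rewrite !mxE; ring.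
rewrite e2 e3 /sqn /qf in H1.
rewrite -!mulmxA in H1.
rewrite -!/(ip _ _) in H1.
rewrite -/v -/u in H1.
rewrite [P *m (u + _)]mulmxDr -scalemxAr in H1.
have s1 : ip h (P *m u) = ip u (P *m h).
  by rewrite ip_mul ipC; move: sP; rewrite /sym_mx => ->.
have s2 : ip h (C^T *m v) = ip v w.
  by rewrite ip_mul trmxK ipC.
clearbody h v u w.
rewrite !(ipDl, ipDr, ipZl, ipZr) in H1.
rewrite !(ipDr, ipZr) s1 s2.
rewrite s1 [ip w v]ipC in H1.
set F := f (zs + t *: h) in H1 cvx.
have key : t * (f z - f zs + (rho * ip v w + ip u (P *m h)))
    + t ^+ 2 * (rho / 2 * ip w w + 1 / 2 * ip h (P *m h))
  = ((F + rho / 2 * (ip v v + t * ip v w + (t * ip v w + t * (t * ip w w)))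
       + 1 / 2 * (ip u (P *m u) + t * ip u (P *m h)
          + (t * ip u (P *m h) + t * (t * ip h (P *m h)))))
     - (f zs + rho / 2 * ip v v + 1 / 2 * ip u (P *m u)))
    + (t * f z + (1 - t) * f zs - F) by field.
by rewrite key; apply: addr_ge0; rewrite subr_ge0.
Qed.

Lemma ip_col (R : realType) m1 m2 (u1 v1 : 'cV[R]_m1) (u2 v2 : 'cV[R]_m2) :
  ip (col_mx u1 u2) (col_mx v1 v2) = ip u1 v1 + ip u2 v2.
Proof. by rewrite /ip tr_col_mx mul_row_col mxE. Qed.

Lemma ip_mxcol (R : realType) p (n : 'I_p -> nat) (u v : forall i, 'cV[R]_(n i)) :
  ip (\mxcol_i u i) (\mxcol_i v i) = \sum_i ip (u i) (v i).
Proof. by rewrite /ip tr_mxcol mul_mxrow_mxcol summxE. Qed.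

Lemma mxcolZ (R : realType) p (n : 'I_p -> nat) m (a : R) (u : forall i, 'M[R]_(n i, m)) :
  a *: \mxcol_i u i = \mxcol_i (a *: u i).
Proof. by apply/matrixP => i j; rewrite !mxE. Qed.

Lemma HM_Q (R : realType) p (n : 'I_p -> nat) nm l (rho gam : R)
  (P : forall i : 'I_p, 'M[R]_(n i)) (Pm : 'M[R]_nm)
  (A : forall i : 'I_p, 'M[R]_(l, n i)) (Am : 'M[R]_(l, nm)) :
  rho != 0 -> gam != 0 ->
  Hmx rho gam P Pm A Am *m Mmx (n := n) rho gam Am = Qmx rho gam P Pm A Am.
Proof.
move=> hr hg.
rewrite /Hmx /Mmx /Qmx mulmx_block -scalar_mx_block !mulmx1 !mulmx0 !add0r.
rewrite mul_col_row mul_col_mx !mul0mx add_block_mx !(addr0, add0r).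
congr block_mx.
- congr block_mx.
  by rewrite mulmx0.
  rewrite mulmxN -!scalemxAl -!scalemxAr.
  apply/matrixP => i j; rewrite !mxE; field; exact: hg.
- congr col_mx; rewrite -scalemxAl -scalemxAr mulmx1 scalerA; congr (_ *: _).
  by field.
- rewrite -scalemxAl mul1mx scale_row_mx scaler0 add_row_mx addr0.
  congr row_mx.
  apply/matrixP => i j; rewrite !mxE; field; apply/andP; split => //.
- rewrite -scalemxAl -scalemxAr mul1mx scalerA; congr (_ *: _).
  by field; apply/andP; split.
Qed.

Theorem lemma4p3 (R : realType) (p : nat) (n : 'I_p -> nat) (nm l : nat)
  (th : forall i : 'I_p, 'cV[R]_(n i) -> R) (thm : 'cV[R]_nm -> R)
  (X : forall i : 'I_p, set 'cV[R]_(n i)) (Xm : set 'cV[R]_nm)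
  (A : forall i : 'I_p, 'M[R]_(l, n i)) (Am : 'M[R]_(l, nm)) (b : 'cV[R]_l)
  (rho gam : R) (P : forall i : 'I_p, 'M[R]_(n i)) (Pm : 'M[R]_nm)
  (x : nat -> forall i : 'I_p, 'cV[R]_(n i)) (xm : nat -> 'cV[R]_nm)
  (y : nat -> 'cV[R]_l) :
  (1 <= p)%N ->
  (forall i, 0 < n i)%N -> (0 < nm)%N -> (0 < l)%N ->
  (forall i, cvx_fun (th i)) -> cvx_fun thm ->
  (forall i, X i !=set0 /\ closed (X i) /\ cvx_set (X i)) ->
  Xm !=set0 -> closed Xm -> cvx_set Xm ->
  (forall i, \rank (A i) = n i) -> \rank Am = nm ->
  (exists xs xms, solvesP th thm X Xm A Am b xs xms) ->
  (exists xs xms ys, in_Wstar th thm X Xm A Am b xs xms ys) ->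
  0 < rho -> 0 < gam < 2 ->
  (forall i, sym_mx (P i) /\ posdef (P i)) -> sym_mx Pm -> posdef Pm ->
  posdef (G1mx rho P A) ->
  LGADMM th thm X Xm A Am b rho gam P Pm x xm y ->
  forall k : nat,
    let d := fun j : nat => wvec (x j) (xm j) (y j) - wbar A Am b rho x xm y j in
    let Q := Qmx rho gam P Pm A Am in
    let M := Mmx (n := n) rho gam Am in
    let H := Hmx rho gam P Pm A Am in
    bf (d k) (M^T *m H *m M) (d k - d k.+1)
    >= 1 / 2 * qf (Q^T + Q) (d k - d k.+1).

Proof.
move=> _ _ _ _ cth cthm cX _ _ cXm _ _ _ _ hr hg sP sPm _ _ HL k.
cbv zeta.
set d := (fun j : nat => _).
set Q := Qmx _ _ _ _ _ _.
set M := Mmx _ _ _.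
set H := Hmx _ _ _ _ _ _.
have hr0 : rho != 0 by rewrite gt_eqF.
have hg0 : gam != 0 by case/andP: hg => h _; rewrite gt_eqF.
case: HL => X0 Xm0 HXj HXm Hy.
have [ybar ybarE] : {yb : nat -> 'cV[R]_l |
   forall j, yb j = y j - rho *: (\sum_i A i *m x j.+1 i + Am *m xm j - b)}
  by exists (fun j => y j - rho *: (\sum_i A i *m x j.+1 i + Am *m xm j - b)).
have Ed : forall j, d j = col_mx (col_mx (Rvec (x j) - Rvec (x j.+1))
                          (xm j - xm j.+1)) (y j - ybar j).
  by move=> j; rewrite /d /wbar /wvec ybarE !opp_col_mx !add_col_mx.

pose c j (i : 'I_p) := \sum_(i0 < p | i0 != i) A i0 *m x j i0 + Am *m xm j - b
                        - rho^-1 *: y j.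
pose g j (i : 'I_p) := rho *: ((A i)^T *m (A i *m x j.+1 i + c j i))
                        + P i *m (x j.+1 i - x j i).
have OJ : forall j i z, X i z ->
    0 <= th i z - th i (x j.+1 i) + ip (z - x j.+1 i) (g j i).
  move=> j i z Xz; have [Xi Hm] := HXj j i.
  apply: (opt_cond (cth i) (proj2 (proj2 (cX i))) (proj1 (sP i)) _ Xi Hm Xz).
  by move=> z'; rewrite /obj_j /c !addrA.

have GR : forall j, \mxcol_i g j i = - ((Acat A)^T *m ybar j)
           - G1mx rho P A *m (Rvec (x j) - Rvec (x j.+1)).
  move=> j.
  rewrite /G1mx /Acat /Rvec -mxcolB tr_mxrow mxcol_mul.
  rewrite mulmxBl -scalemxAl mulmxBl !mul_mxdiag_mxcol -mulmxA mul_mxrow_mxcol mxcol_mul.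
  rewrite -mxcolB mxcolZ -mxcolB -mxcolN -mxcolB.
  apply: eq_mxcol => i; rewrite /g /c ybarE.
  rewrite [\sum_i0 A i0 *m (_ - _)](eq_bigr (fun i0 => A i0 *m x j i0 - A i0 *m x j.+1 i0)); last by move=> ? _; rewrite mulmxBr.
  rewrite sumrB [\sum_i0 A i0 *m x j i0](bigD1 i) //=.
  set T := \sum_(i0 < p | i0 != i) A i0 *m x j i0.
  set S1 := \sum_i0 A i0 *m x j.+1 i0.
  rewrite !(mulmxDr, mulmxBr, mulmxN, scalerDr, scalerBr, scalerN, mulmxBl, mulmxDl, mulNmx).
  rewrite -!scalemxAr !mulmxA.
  by apply/matrixP => a z; rewrite !mxE; field.

pose cm j := gam *: \sum_i A i *m x j.+1 i + (1 - gam) *: (b - Am *m xm j) - b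
             - rho^-1 *: y j.
pose gm j := rho *: (Am^T *m (Am *m xm j.+1 + cm j)) + Pm *m (xm j.+1 - xm j).
have OM : forall j z, Xm z ->
    0 <= thm z - thm (xm j.+1) + ip (z - xm j.+1) (gm j).
  move=> j z Xz; have [Xi Hm] := HXm j.
  apply: (opt_cond cthm cXm sPm _ Xi Hm Xz).
  move=> z'; rewrite /obj_m /cm; congr (_ + _ * sqn _ + _).
  set S1 := \sum_i A i *m x j.+1 i.
  by apply/matrixP => a e; rewrite !mxE; ring.
have GM : forall j, gm j = - (Am^T *m y j.+1) + Pm *m (xm j.+1 - xm j).
  move=> j; rewrite /gm /cm Hy.
  set S1 := \sum_i A i *m x j.+1 i.
  congr (_ + _).
  rewrite !(mulmxDr, mulmxBr, mulmxN, scalerDr, scalerBr, scalerN) -!scalemxAr !mulmxA.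
  by apply/matrixP => a e; rewrite !mxE; field.

have I1 : 0 <= ip (Rvec (x k.+1) - Rvec (x k.+2))
   (G1mx rho P A *m ((Rvec (x k) - Rvec (x k.+1)) - (Rvec (x k.+1) - Rvec (x k.+2)))
    + (Acat A)^T *m (ybar k - ybar k.+1)).
  have hs : 0 <= \sum_i ip (x k.+1 i - x k.+2 i) (g k.+1 i - g k i).
    apply: sumr_ge0 => i _.
    have h1 := OJ k i (x k.+2 i) (HXj k.+1 i).1.
    have h2 := OJ k.+1 i (x k.+1 i) (HXj k i).1.
    have e : ip (x k.+2 i - x k.+1 i) (g k i) = - ip (x k.+1 i - x k.+2 i) (g k i).
      by rewrite -ipNl opprB.
    rewrite ipBr; lra.
  rewrite -ip_mxcol mxcolB [\mxcol_i (g k.+1 i - g k i)]mxcolB !GR in hs.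
  move: hs; rewrite /Rvec; congr (_ <= ip _ _).
  rewrite !(mulmxDr, mulmxBr, mulmxN).
  set G1 := G1mx rho P A.
  by apply/matrixP => a e; rewrite !mxE; ring.
have I2 : 0 <= ip (xm k.+1 - xm k.+2) (gm k.+1 - gm k).
  have h1 := OM k (xm k.+2) (HXm k.+1).1.
  have h2 := OM k.+1 (xm k.+1) (HXm k).1.
  have e : ip (xm k.+2 - xm k.+1) (gm k) = - ip (xm k.+1 - xm k.+2) (gm k).
    by rewrite -ipNl opprB.
  rewrite ipBr; lra.

have Hyb : forall j, y j.+1 = ybar j + rho *: (Am *m (xm j - xm j.+1))
                              + (1 - gam) *: (y j - ybar j).
  move=> j; rewrite Hy ybarE.
  set S1 := \sum_i A i *m x j.+1 i.
  rewrite !mulmxBr.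
  by apply/matrixP => a e; rewrite !mxE; ring.
have AR : forall j, Acat A *m Rvec (x j) = \sum_i A i *m x j i.
  by move=> j; rewrite /Acat /Rvec mul_mxrow_mxcol.
have E3 : - (Am *m ((xm k - xm k.+1) - (xm k.+1 - xm k.+2)))
          + rho^-1 *: ((y k - ybar k) - (y k.+1 - ybar k.+1))
        = Acat A *m (Rvec (x k.+1) - Rvec (x k.+2)) + Am *m (xm k.+1 - xm k.+2).
  rewrite !mulmxBr !AR !ybarE.
  set S1 := \sum_i A i *m x k.+1 i; set S2 := \sum_i A i *m x k.+2 i.
  by apply/matrixP => a e; rewrite !mxE; field.
have E4 : gm k.+1 - gm k = Am^T *m (ybar k - ybar k.+1)
     + (rho *: (Am^T *m Am) + Pm) *m ((xm k - xm k.+1) - (xm k.+1 - xm k.+2))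
     + ((1 - gam) *: Am^T) *m ((y k - ybar k) - (y k.+1 - ybar k.+1)).
  rewrite !GM (Hyb k.+1) (Hyb k).
  do 3 rewrite ?(mulmxDr, mulmxBr, mulmxN, mulmxDl, mulmxBl, mulNmx) -?scalemxAr -?scalemxAl.
  rewrite ?mulmxA.
  by apply/matrixP => a e; rewrite !mxE; ring.

have HMQ : H *m M = Q by exact: HM_Q.
pose a := col_mx (col_mx (Rvec (x k.+1) - Rvec (x k.+2)) (xm k.+1 - xm k.+2))
                 (ybar k - ybar k.+1).
have Ee : d k - d k.+1 = col_mx (col_mx
     ((Rvec (x k) - Rvec (x k.+1)) - (Rvec (x k.+1) - Rvec (x k.+2)))
     ((xm k - xm k.+1) - (xm k.+1 - xm k.+2)))
     ((y k - ybar k) - (y k.+1 - ybar k.+1)).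
  by rewrite !Ed !opp_col_mx !add_col_mx.
have Md : M *m d k = (d k - d k.+1) + a.
  rewrite Ee (Ed k) /a /M /Mmx mul_block_col -scalar_mx_block mul1mx mul0mx addr0.
  rewrite mul_row_col mul0mx add0r !add_col_mx.
  congr col_mx; first by congr col_mx; rewrite subrK.
  rewrite (Hyb k) mulNmx -!scalemxAl mul1mx !mulmxBr.
  by apply/matrixP => i j; rewrite !mxE; ring.
rewrite /bf /qf.
have L1 : ((d k)^T *m (M^T *m H *m M) *m (d k - d k.+1)) 0 0
          = ip (M *m d k) (Q *m (d k - d k.+1)).
  by rewrite /ip -HMQ trmx_mul !mulmxA.
have L2 : ((d k - d k.+1)^T *m (Q^T + Q) *m (d k - d k.+1)) 0 0
          = 2 * ip (d k - d k.+1) (Q *m (d k - d k.+1)).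
  have -> : ((d k - d k.+1)^T *m (Q^T + Q) *m (d k - d k.+1)) 0 0
     = ip (d k - d k.+1) ((Q^T + Q) *m (d k - d k.+1)) by rewrite /ip mulmxA.
  rewrite mulmxDl ipDr [ip _ (Q^T *m _)]ip_mul trmxK ipC.
  ring.
rewrite L1 L2 Md [ip (_ + a) _]ipDl.
suff Y : 0 <= ip a (Q *m (d k - d k.+1)) by lra.
rewrite Ee /a /Q /Qmx mul_block_col mul_block_col mul_col_mx mul_row_col.
rewrite !(mul0mx, addr0, add0r) add_col_mx addr0 scalemx1 mul_scalar_mx !ip_col.
rewrite mulNmx E3.
rewrite E4 in I2.
rewrite !ipDr in I1 I2 *.
rewrite [ip _ ((Acat A)^T *m _)]ip_mul [ip _ (Am^T *m _)]ip_mul !trmxK in I1 I2.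
rewrite [ip (ybar k - ybar k.+1) (Acat A *m _)]ipC [ip (ybar k - ybar k.+1) (Am *m _)]ipC.
lra.
Qed.
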